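(* Let $\mathbb{C}$ be a locally small category and $\mathbb{C}_{\mathit{fin}}$ a full subcategory satisfying (C1)–(C5) below. Let $F\in\mathrm{Ob}(\mathbb{C})$ be locally finite and let $U:\mathbb{C}^*\to\mathbb{C}$ be a reasonable precompact expansion with unique restrictions which separates points. Then (a) $\mathcal{S}_F=\{N(e,\mathcal{A}):U(\mathcal{A})\in\mathrm{Ob}(\mathbb{C}_{\mathit{fin}}),\ e\in\hom(U(\mathcal{A}),F)\}$ is a base consisting of clopen sets of a topology $\sigma_F$ on $U^{-1}(F)$; and (b) $U^{-1}(F)$ with the topology $\sigma_F$ is a Hausdorff space.
   Context: Write $A\to B$ if $\hom(A,B)\ne\varnothing$. Conditions: (C1) all morphisms of $\mathbb{C}$ are monomorphisms; (C2) $\mathrm{Ob}(\mathbb{C}_{\mathit{fin}})$ is a set; (C3) $\hom(A,B)$ is finite for $A,B\in\mathrm{Ob}(\mathbb{C}_{\mathit{fin}})$; (C4) for every $F\in\mathrm{Ob}(\mathbb{C})$ there is $A\in\mathrm{Ob}(\mathbb{C}_{\mathit{fin}})$ with $A\to F$; (C5) for every $B\in\mathrm{Ob}(\mathbb{C}_{\mathit{fin}})$ the set $\{A\in\mathrm{Ob}(\mathbb{C}_{\mathit{fin}}):A\to B\}$ is finite. $F$ is locally finite if for all $A,B\in\mathrm{Ob}(\mathbb{C}_{\mathit{fin}})$, $e\in\hom(A,F)$, $f\in\hom(B,F)$ there exist $D\in\mathrm{Ob}(\mathbb{C}_{\mathit{fin}})$, $r\in\hom(D,F)$, $p\in\hom(A,D)$,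 $q\in\hom(B,D)$ with $r\cdot p=e$, $r\cdot q=f$, such that for every $H\in\mathrm{Ob}(\mathbb{C})$, $r'\in\hom(H,F)$, $p'\in\hom(A,H)$, $q'\in\hom(B,H)$ with $r'\cdot p'=e$, $r'\cdot q'=f$ there is $s\in\hom(D,H)$ with $r'\cdot s=r$, $s\cdot p=p'$, $s\cdot q=q'$. An expansion of $\mathbb{C}$ is a locally small category $\mathbb{C}^*$ with a functor $U:\mathbb{C}^*\to\mathbb{C}$ surjective on objects and injective on hom-sets; we regard $\hom_{\mathbb{C}^*}(\mathcal{A},\mathcal{B})\subseteq\hom_{\mathbb{C}}(U\mathcal{A},U\mathcal{B})$, and $U^{-1}(A)=\{\mathcal{A}:U(\mathcal{A})=A\}$. $U$ is reasonable if for every $e\in\hom(A,B)$ and $\mathcal{A}\in U^{-1}(A)$ there is $\mathcal{B}\in U^{-1}(B)$ with $e\in\hom(\mathcal{A},\mathcal{B})$; it has unique restrictions if for every $\mathcal{B}\in\mathrm{Ob}(\mathbb{C}^* )$ and $e\in\hom(A,U(\mathcal{B}))$ there is exactly one $\mathcal{A}\in U^{-1}(A)$ with $e\in\hom(\mathcal{A},\mathcal{B})$, denoted $\mathcal{B}|_e$; it is precompact if $U^{-1}(A)$ is a set for every $A\in\mathrm{Ob}(\mathbb{C})$ and finite for $A\in\mathrm{Ob}(\mathbb{C}_{\mathit{fin}})$; it separates points if for every $F\in\mathrm{Ob}(\mathbb{C})$ and all distinct $\mathcal{F}_1,\mathcal{F}_2\in U^{-1}(F)$ there are $A\in\mathrm{Ob}(\mathbb{C}_{\mathit{fin}})$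 and $e\in\hom(A,F)$ with $\mathcal{F}_1|_e\ne\mathcal{F}_2|_e$. For $e\in\hom(A,F)$ and $\mathcal{A}\in U^{-1}(A)$, $N(e,\mathcal{A})=\{\mathcal{F}\in U^{-1}(F):e\in\hom(\mathcal{A},\mathcal{F})\}$. *)

(* Defs.v *)
From Stdlib Require Import List.
Set Implicit Arguments.
Unset Strict Implicit.

Record Category := {
  Ob :> Type;
  Hom : Ob -> Ob -> Type;
  idm : forall A, Hom A A;
  comp : forall A B C, Hom B C -> Hom A B -> Hom A C;   (* comp g f = g . f *)
  comp_assoc : forall A B C D (h : Hom C D) (g : Hom B C) (f : Hom A B),
      comp h (comp g f) = comp (comp h g) f;
  comp_id_l : forall A B (f : Hom A B), comp (idm B) f = f;
  comp_id_r : forall A B (f : Hom A B), comp f (idm A) = f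
}.
Arguments Hom {c} A B.
Arguments idm {c} A.
Arguments comp {c A B C} _ _.

Record Functor (D C : Category) := {
  Fobj :> Ob D -> Ob C;
  Fmor : forall A B : Ob D, Hom A B -> Hom (Fobj A) (Fobj B);
  Fmor_id : forall A, Fmor (idm A) = idm (Fobj A);
  Fmor_comp : forall A B E (g : Hom B E) (f : Hom A B),
      Fmor (comp g f) = comp (Fmor g) (Fmor f)
}.
Arguments Fmor {D C} f {A B} _ : rename.

Definition arr (C : Category) (A B : Ob C) : Prop := inhabited (Hom A B).

Definition castHom (C : Category) (A A' B B' : Ob C) (p : A = A') (q : B = B')
  (f : Hom A B) : Hom A' B' :=
  match p in _ = X, q in _ = Y return Hom X Y with eq_refl, eq_refl => f end.

(* Conditions (C1)-(C5) on a full subcategory given by the object predicate fin *)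
Definition C1 (C : Category) : Prop :=
  forall (A B E : Ob C) (f : Hom A B) (g h : Hom E A), comp f g = comp f h -> g = h.
(* (C2): Ob(C_fin) is a set -- automatic, objects of C_fin form the type {A | fin A}. *)
Definition C3 (C : Category) (fin : Ob C -> Prop) : Prop :=
  forall A B : Ob C, fin A -> fin B ->
    exists l : list (Hom A B), forall f, In f l.
Definition C4 (C : Category) (fin : Ob C -> Prop) : Prop :=
  forall F : Ob C, exists A, fin A /\ arr A F.
Definition C5 (C : Category) (fin : Ob C -> Prop) : Prop :=
  forall B : Ob C, fin B ->
    exists l : list (Ob C), forall A, fin A -> arr A B -> In A l.

Definition locally_finite (C : Category) (fin : Ob C -> Prop) (F : Ob C) : Prop :=
  forall (A B : Ob C) (e : Hom A F) (f : Hom B F), fin A -> fin B ->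
    exists (D : Ob C) (r : Hom D F) (p : Hom A D) (q : Hom B D),
      fin D /\ comp r p = e /\ comp r q = f /\
      forall (H : Ob C) (r' : Hom H F) (p' : Hom A H) (q' : Hom B H),
        comp r' p' = e -> comp r' q' = f ->
        exists s : Hom D H, comp r' s = r /\ comp s p = p' /\ comp s q = q'.

Definition expansion (Cs C : Category) (U : Functor Cs C) : Prop :=
  (forall A : Ob C, exists As : Ob Cs, U As = A) /\
  (forall (As Bs : Ob Cs) (g h : Hom As Bs), Fmor U g = Fmor U h -> g = h).

(* e \in hom(As, Bs), for e : hom(A,B), U As = A, U Bs = B *)
Definition mem_hom (Cs C : Category) (U : Functor Cs C) (A B : Ob C) (e : Hom A B)
  (As Bs : Ob Cs) : Prop :=
  exists (p : U As = A) (q : U Bs = B) (g : Hom As Bs), castHom p q (Fmor U g) = e.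

Definition reasonable (Cs C : Category) (U : Functor Cs C) : Prop :=
  forall (A B : Ob C) (e : Hom A B) (As : Ob Cs), U As = A ->
    exists Bs : Ob Cs, mem_hom U e As Bs.

Definition unique_restrictions (Cs C : Category) (U : Functor Cs C) : Prop :=
  forall (Bs : Ob Cs) (A : Ob C) (e : Hom A (U Bs)),
    exists! As : Ob Cs, mem_hom U e As Bs.

(* U^{-1}(A) is always a set (a subtype of Ob Cs); finiteness for A in C_fin *)
Definition precompact (Cs C : Category) (U : Functor Cs C) (fin : Ob C -> Prop) : Prop :=
  forall A : Ob C, fin A -> exists l : list (Ob Cs), forall As, U As = A -> In As l.

(* using unique restrictions, F1|_e and F2|_e are the unique As with e in hom(As, Fi) *)
Definition separates_points (Cs C : Category) (U : Functor Cs C) (fin : Ob C -> Prop) : Prop :=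
  forall (F : Ob C) (F1 F2 : Ob Cs), U F1 = F -> U F2 = F -> F1 <> F2 ->
    exists (A : Ob C) (e : Hom A F) (A1 A2 : Ob Cs),
      fin A /\ mem_hom U e A1 F1 /\ mem_hom U e A2 F2 /\ A1 <> A2.

Definition fibre (Cs C : Category) (U : Functor Cs C) (F : Ob C) : Type :=
  { Fs : Ob Cs | U Fs = F }.

Definition Nset (Cs C : Category) (U : Functor Cs C) (F A : Ob C) (e : Hom A F)
  (As : Ob Cs) : fibre U F -> Prop :=
  fun x => mem_hom U e As (proj1_sig x).

Definition S_F (Cs C : Category) (U : Functor Cs C) (fin : Ob C -> Prop) (F : Ob C)
  : (fibre U F -> Prop) -> Prop :=
  fun S => exists (As : Ob Cs) (e : Hom (U As) F), fin (U As) /\ S = Nset e As.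

Definition is_topology (X : Type) (tau : (X -> Prop) -> Prop) : Prop :=
  tau (fun _ => False) /\ tau (fun _ => True) /\
  (forall O1 O2, tau O1 -> tau O2 -> tau (fun x => O1 x /\ O2 x)) /\
  (forall fam : (X -> Prop) -> Prop, (forall O, fam O -> tau O) ->
     tau (fun x => exists O, fam O /\ O x)).

Definition is_base_of (X : Type) (S tau : (X -> Prop) -> Prop) : Prop :=
  (forall B, S B -> tau B) /\
  (forall O, tau O -> forall x, O x -> exists B, S B /\ B x /\ forall y, B y -> O y).

Definition clopen (X : Type) (tau : (X -> Prop) -> Prop) (B : X -> Prop) : Prop :=
  tau B /\ tau (fun x => ~ B x).

Definition hausdorff (X : Type) (tau : (X -> Prop) -> Prop) : Prop :=
  forall x y : X, x <> y -> exists O1 O2, tau O1 /\ tau O2 /\ O1 x /\ O2 y /\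
    forall z, ~ (O1 z /\ O2 z).

Arguments S_F {Cs C} U fin F _.
Arguments Nset {Cs C} U {F A} e As _.

(* Main.v *)
Require Import Defs.
From Stdlib Require Import Eqdep.
Set Implicit Arguments.
Unset Strict Implicit.

Lemma mem_comp (Cs C : Category) (U : Functor Cs C) (A B D : Ob C)
  (f : Hom A B) (g : Hom B D) As Bs Ds :
  mem_hom U f As Bs -> mem_hom U g Bs Ds -> mem_hom U (comp g f) As Ds.
Proof.
  intros [p [q [f' Hf]]] [p' [q' [g' Hg]]].
  subst A B D. rewrite (UIP_refl _ _ p') in Hg. simpl in Hf, Hg. subst f g.
  exists eq_refl, eq_refl, (comp g' f'). simpl. apply Fmor_comp.
Qed.

Lemma mem_U (Cs C : Category) (U : Functor Cs C) (A B : Ob C) (e : Hom A B) As Bs :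
  mem_hom U e As Bs -> U As = A.
Proof. intros [p _]; exact p. Qed.

Lemma restr (Cs C : Category) (U : Functor Cs C) (F : Ob C) (x : fibre U F)
  (A : Ob C) (e : Hom A F) : unique_restrictions U ->
  exists As, mem_hom U e As (proj1_sig x) /\
    forall As', mem_hom U e As' (proj1_sig x) -> As' = As.
Proof.
  intros UR. destruct x as [X HX]; simpl. subst F.
  destruct (UR X A e) as [As [H1 H2]]. exists As; split; auto.
  intros; symmetry; apply H2; auto.
Qed.

Lemma restr0 (Cs C : Category) (U : Functor Cs C) (Bs : Ob Cs) (B A : Ob C)
  (e : Hom A B) : unique_restrictions U -> U Bs = B ->
  exists As, mem_hom U e As Bs.
Proof.
  intros UR HB. subst B. destruct (UR Bs A e) as [As [H1 _]]. eauto.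
Qed.

Lemma basic (Cs C : Category) (U : Functor Cs C) (fin : Ob C -> Prop) (F A : Ob C)
  (e : Hom A F) As : fin A -> U As = A -> S_F U fin F (Nset U e As).
Proof. intros HA HU. subst A. exists As, e. auto. Qed.

Theorem proposition5p7 (C : Category) (fin : Ob C -> Prop)
  (Cs : Category) (U : Functor Cs C) (F : Ob C) :
  C1 C -> C3 fin -> C4 fin -> C5 fin ->
  locally_finite fin F ->
  expansion U -> reasonable U -> precompact U fin -> unique_restrictions U ->
  separates_points U fin ->
  exists tau : (fibre U F -> Prop) -> Prop,
    is_topology tau /\ is_base_of (S_F U fin F) tau /\
    (forall B, S_F U fin F B -> clopen tau B) /\
    hausdorff tau.
Proof.
  intros c1 c3 c4 c5 LF EX RE PC UR SP.
  set (tau := fun O : fibre U F -> Prop => forall x, O x ->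
        exists B, S_F U fin F B /\ B x /\ forall y, B y -> O y).
  assert (Hbo : forall B, S_F U fin F B -> tau B).
  { intros B HB x Hx. exists B. auto. }
  exists tau. split; [|split; [|split]].
  - split; [|split; [|split]].
    + intros x [].
    + intros x _. destruct (c4 F) as [A [HA [h]]].
      destruct (restr x h UR) as [As [H1 _]].
      exists (Nset U h As). split; [|split; auto].
      apply basic; auto. eapply mem_U; eauto.
    + intros O1 O2 H1 H2 x [Hx1 Hx2].
      destruct (H1 x Hx1) as [B1 [[A1 [e1 [F1 ->]]] [Bx1 S1]]].
      destruct (H2 x Hx2) as [B2 [[A2 [e2 [F2 ->]]] [Bx2 S2]]].
      destruct (LF _ _ e1 e2 F1 F2) as [D [r [p [q [FD [Hp [Hq _]]]]]]].
      destruct (restr x r UR) as [Ds [HDs _]].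
      destruct (restr0 p UR (mem_U HDs)) as [P1 HP1].
      destruct (restr0 q UR (mem_U HDs)) as [P2 HP2].
      assert (E1 : forall z : fibre U F, mem_hom U r Ds (proj1_sig z) ->
                mem_hom U e1 P1 (proj1_sig z)).
      { intros z Hz. rewrite <- Hp. eapply mem_comp; eauto. }
      assert (E2 : forall z : fibre U F, mem_hom U r Ds (proj1_sig z) ->
                mem_hom U e2 P2 (proj1_sig z)).
      { intros z Hz. rewrite <- Hq. eapply mem_comp; eauto. }
      destruct (restr x e1 UR) as [X1 [_ U1]].
      destruct (restr x e2 UR) as [X2 [_ U2]].
      assert (P1 = A1) by (rewrite (U1 _ (E1 x HDs)); symmetry; apply U1; exact Bx1).
      assert (P2 = A2) by (rewrite (U2 _ (E2 x HDs)); symmetry; apply U2; exact Bx2).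
      subst P1 P2.
      exists (Nset U r Ds). split; [|split].
      * apply basic; auto. eapply mem_U; eauto.
      * exact HDs.
      * intros y Hy. split; [apply S1 | apply S2]; unfold Nset; auto.
    + intros fam Hfam x [O [HO Ox]].
      destruct (Hfam O HO x Ox) as [B [HB [Bx SB]]].
      exists B. split; [auto|split; auto]. intros y By. exists O; auto.
  - split; auto.
  - intros B HB. split; auto.
    destruct HB as [As [e [FA ->]]].
    intros x Hx. destruct (restr x e UR) as [As' [H1 H2]].
    exists (Nset U e As'). split; [|split].
    + apply basic; auto. eapply mem_U; eauto.
    + exact H1.
    + intros y Hy Hy'. unfold Nset in *.
      destruct (restr y e UR) as [Y [_ HY]].
      assert (As = As') by (rewrite (HY _ Hy), (HY _ Hy'); reflexivity).
      subst. auto.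
  - intros x y Hxy.
    assert (Hne : proj1_sig x <> proj1_sig y).
    { intro E. apply Hxy. destruct x, y; simpl in E; subst.
      f_equal. apply UIP. }
    destruct (SP F _ _ (proj2_sig x) (proj2_sig y) Hne)
      as [A [e [A1 [A2 [FA [H1 [H2 Hn]]]]]]].
    exists (Nset U e A1), (Nset U e A2). split; [|split; [|split; [|split]]].
    + apply Hbo, basic; auto. eapply mem_U; eauto.
    + apply Hbo, basic; auto. eapply mem_U; eauto.
    + exact H1.
    + exact H2.
    + intros z [Z1 Z2]. destruct (restr z e UR) as [W [_ HW]].
      apply Hn. rewrite (HW _ Z1), (HW _ Z2). reflexivity.
Qed.
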